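(* For every $n\ge 2$, the CNF formula $MAP_n^{2n-3}$ has a DPLL refutation of size $2\lceil \log_2 n\rceil+1$.
   Context: MAP planning domain. Fix $n\ge 2$. The map is an undirected graph with $3n-3$ nodes: a centre $L^0$; a path (branch 1) $L^0 - L_1^1 - \dots - L_1^{2n-3}$; and, for each $i=2,\dots,n$, a single node $L_i^1$ adjacent to $L^0$. Facts are $at\text{-}x$ and $visited\text{-}x$. For every edge $\{x,y\}$ and both orientations there is an action $move\text{-}x\text{-}y$ with precondition $\{at\text{-}x\}$, add effects $\{at\text{-}y, visited\text{-}y\}$, delete effect $\{at\text{-}x\}$. The initial state is $\{at\text{-}L^0\}$. The goal of $MAP_n^{2n-3}$ is $\{visited\text{-}L_1^{2n-3}, visited\text{-}L_2^1\}$. The CNF formula $MAP_n^{2n-3}$ is the standard Graphplan-based (Blackbox-style) SAT encoding of this task with $T=2n-2$ time steps (unsatisfiable, since a shortest plan has $2n-1$ steps). Build the Graphplan planning graph from the initial state, with a NOOP action $NOOP\text{-}p$ (precondition and add effect $\{p\}$) for each fact $p$. For each $t=1,\dots,T$ there is a variable $a(t)$ for every action $a$ (including NOOPs) in action layer $t$. Clauses: goal clauses $\{a(T): g\in add(a)\}$ for each goal $g$; precondition clauses $\{\neg a(t)\}\cup\{a'(t-1): p\in add(a')\}$ for each $a(t)$, $t\ge 2$, $p\in pre(a)$; mutex clauses $\{\neg a(t),\neg a'(t)\}$ for pairs of actions Graphplan marks mutually exclusive at layer $t$ (interference or competing needs); in particular any two move actions at the same step are mutually exclusive. A DPLL refutation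 is a search tree of the Davis–Putnam–Logemann–Loveland procedure (branching on variables, applying unit propagation at each node) in which every leaf yields the empty clause; its size is its number of search nodes. *)

(* Defs.v *)
From Stdlib Require Import List Arith Lia.
Import ListNotations.

Inductive lit (V : Type) : Type :=
| Pos : V -> lit V
| Neg : V -> lit V.
Arguments Pos {V} _.
Arguments Neg {V} _.

Definition lneg {V : Type} (l : lit V) : lit V :=
  match l with Pos v => Neg v | Neg v => Pos v end.

Definition clause (V : Type) := lit V -> Prop.
Definition cnf (V : Type) := clause V -> Prop.

Inductive up_implied {V : Type} (F : cnf V) (rho : list (lit V)) : lit V -> Prop :=
| up_dec : forall l, In l rho -> up_implied F rho l
| up_unit : forall (C : clause V) l,
    F C -> C l ->
    (forall l', C l' -> l' <> l -> up_implied F rho (lneg l')) ->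
    up_implied F rho l.

Definition up_conflict {V : Type} (F : cnf V) (rho : list (lit V)) : Prop :=
  (exists C, F C /\ forall l, C l -> up_implied F rho (lneg l))
  \/ (exists l, up_implied F rho l /\ up_implied F rho (lneg l)).

Inductive dpll_tree (V : Type) : Type :=
| DLeaf : dpll_tree V
| DBranch : V -> dpll_tree V -> dpll_tree V -> dpll_tree V.
Arguments DLeaf {V}.
Arguments DBranch {V} _ _ _.

Fixpoint tree_size {V : Type} (t : dpll_tree V) : nat :=
  match t with
  | DLeaf => 1
  | DBranch _ t1 t2 => 1 + tree_size t1 + tree_size t2
  end.

Fixpoint dpll_refutes {V : Type} (F : cnf V) (isvar : V -> Prop)
  (rho : list (lit V)) (t : dpll_tree V) : Prop :=
  match t with
  | DLeaf => up_conflict F rho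
  | DBranch v t1 t2 =>
      ~ up_conflict F rho /\ isvar v /\
      ~ up_implied F rho (Pos v) /\ ~ up_implied F rho (Neg v) /\
      dpll_refutes F isvar (Pos v :: rho) t1 /\
      dpll_refutes F isvar (Neg v :: rho) t2
  end.

Definition dpll_refutation {V : Type} (F : cnf V) (isvar : V -> Prop)
  (t : dpll_tree V) : Prop := dpll_refutes F isvar [] t.

Record task := {
  Fact : Type;
  Act : Type;
  is_act : Act -> Prop;
  pre : Act -> Fact -> Prop;
  add : Act -> Fact -> Prop;
  del : Act -> Fact -> Prop;
  init : Fact -> Prop;
  goal : Fact -> Prop }.

Inductive gact (P : task) : Type :=
| Real : Act P -> gact P
| Noop : Fact P -> gact P.
Arguments Real {P} _.
Arguments Noop {P} _.

Section Graphplan.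
Variable P : task.

Definition gis_act (a : gact P) : Prop :=
  match a with Real a => is_act P a | Noop _ => True end.
Definition gpre (a : gact P) (p : Fact P) : Prop :=
  match a with Real a => pre P a p | Noop q => p = q end.
Definition gadd (a : gact P) (p : Fact P) : Prop :=
  match a with Real a => add P a p | Noop q => p = q end.
Definition gdel (a : gact P) (p : Fact P) : Prop :=
  match a with Real a => del P a p | Noop _ => False end.

(* A fact layer: the facts present and the fact-mutex relation. *)
Definition flayer := ((Fact P -> Prop) * (Fact P -> Fact P -> Prop))%type.

Definition act_in (FL : flayer) (a : gact P) : Prop :=
  gis_act a /\ (forall p, gpre a p -> fst FL p) /\
  (forall p q, gpre a p -> gpre a q -> ~ snd FL p q).

Definition interfere (a b : gact P) : Prop :=
  (exists p, gdel a p /\ (gpre b p \/ gadd b p)) \/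
  (exists p, gdel b p /\ (gpre a p \/ gadd a p)).

Definition act_mutex (FL : flayer) (a b : gact P) : Prop :=
  act_in FL a /\ act_in FL b /\ a <> b /\
  (interfere a b \/
   exists p q, gpre a p /\ gpre b q /\ snd FL p q).

Definition next_flayer (FL : flayer) : flayer :=
  (fun p => exists a, act_in FL a /\ gadd a p,
   fun p q => p <> q /\
     (exists a, act_in FL a /\ gadd a p) /\
     (exists b, act_in FL b /\ gadd b q) /\
     (forall a b, act_in FL a -> act_in FL b -> gadd a p -> gadd b q ->
                  act_mutex FL a b)).

Fixpoint fact_layer (t : nat) : flayer :=
  match t with
  | 0 => (init P, fun _ _ => False)
  | S t' => next_flayer (fact_layer t')
  end.

(* Action layer t >= 1 and its mutex relation. *)
Definition act_at (t : nat) (a : gact P) : Prop := act_in (fact_layer (t - 1)) a.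
Definition mutex_at (t : nat) (a b : gact P) : Prop :=
  act_mutex (fact_layer (t - 1)) a b.

Definition gvar := (gact P * nat)%type.
Definition is_gvar (T : nat) (v : gvar) : Prop :=
  1 <= snd v <= T /\ act_at (snd v) (fst v).

Definition same_clause (C D : clause gvar) : Prop := forall l, C l <-> D l.

Definition graphplan_cnf (T : nat) : cnf gvar := fun C =>
  (exists g, goal P g /\
     same_clause C (fun l => exists a, l = Pos (a, T) /\ act_at T a /\ gadd a g))
  \/
  (exists t a p, 2 <= t <= T /\ act_at t a /\ gpre a p /\
     same_clause C (fun l => l = Neg (a, t) \/
        exists a', l = Pos (a', t - 1) /\ act_at (t - 1) a' /\ gadd a' p))
  \/
  (exists t a b, 1 <= t <= T /\ mutex_at t a b /\
     same_clause C (fun l => l = Neg (a, t) \/ l = Neg (b, t))).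

End Graphplan.

(* L0 = centre; L1 k = L_1^k (branch 1, 1 <= k <= 2n-3);
   Lb i = L_i^1 (2 <= i <= n). *)
Inductive node : Type :=
| L0 : node
| L1 : nat -> node
| Lb : nat -> node.

(* Directed adjacency (both orientations of every undirected edge). *)
Definition map_edge (n : nat) (x y : node) : Prop :=
  (x = L0 /\ y = L1 1) \/ (x = L1 1 /\ y = L0) \/
  (exists k, 1 <= k < 2 * n - 3 /\
     ((x = L1 k /\ y = L1 (k + 1)) \/ (x = L1 (k + 1) /\ y = L1 k))) \/
  (exists i, 2 <= i <= n /\ ((x = L0 /\ y = Lb i) \/ (x = Lb i /\ y = L0))).

Inductive map_fact : Type :=
| At : node -> map_fact
| Visited : node -> map_fact.

(* Action move-x-y is the pair (x, y). *)
Definition MAP_task (n : nat) : task := {|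
  Fact := map_fact;
  Act := (node * node)%type;
  is_act := fun a => map_edge n (fst a) (snd a);
  pre := fun a p => p = At (fst a);
  add := fun a p => p = At (snd a) \/ p = Visited (snd a);
  del := fun a p => p = At (fst a);
  init := fun p => p = At L0;
  goal := fun p => p = Visited (L1 (2 * n - 3)) \/ p = Visited (Lb 2) |}.

(* The CNF formula MAP_n^{2n-3}: T = 2n-2 time steps. *)
Definition MAP_horizon (n : nat) : nat := 2 * n - 2.
Definition MAP_cnf (n : nat) : cnf (gvar (MAP_task n)) :=
  graphplan_cnf (MAP_task n) (MAP_horizon n).
Definition MAP_isvar (n : nat) : gvar (MAP_task n) -> Prop :=
  is_gvar (MAP_task n) (MAP_horizon n).

(* Main.v *)
Require Import Defs.
From Stdlib Require Import Arith Lia List.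
Import ListNotations.


Lemma pre_clause_unit (P : task) (T : nat) rho t a p a0 :
  2 <= t <= T -> act_at P t a -> gpre P a p ->
  act_at P (t-1) a0 -> gadd P a0 p ->
  up_implied (graphplan_cnf P T) rho (Pos (a,t)) ->
  (forall a', act_at P (t-1) a' -> gadd P a' p ->
     a' = a0 \/ up_implied (graphplan_cnf P T) rho (Neg (a',t-1))) ->
  up_implied (graphplan_cnf P T) rho (Pos (a0,t-1)).
Proof.
  intros Ht Ha Hp Ha0 Hg0 HI Hall.
  apply up_unit with (C := fun l => l = Neg (a, t) \/ exists a', l = Pos (a', t - 1) /\ act_at P (t - 1) a' /\ gadd P a' p).
  - right; left. exists t, a, p. split; [lia|]. split; [exact Ha|]. split; [exact Hp|]. intro l; tauto.
  - right. exists a0. auto.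
  - intros l' [->|[a' [-> [H1 H2]]]] Hne; simpl.
    + exact HI.
    + destruct (Hall a' H1 H2) as [->|H]; [congruence|exact H].
Qed.

Lemma pre_clause_conflict (P : task) (T : nat) rho t a p :
  2 <= t <= T -> act_at P t a -> gpre P a p ->
  up_implied (graphplan_cnf P T) rho (Pos (a,t)) ->
  (forall a', act_at P (t-1) a' -> gadd P a' p ->
     up_implied (graphplan_cnf P T) rho (Neg (a',t-1))) ->
  up_conflict (graphplan_cnf P T) rho.
Proof.
  intros Ht Ha Hp HI Hall. left.
  exists (fun l => l = Neg (a, t) \/ exists a', l = Pos (a', t - 1) /\ act_at P (t - 1) a' /\ gadd P a' p).
  split.
  - right; left. exists t, a, p. split; [lia|]. split; [exact Ha|]. split; [exact Hp|]. intro l; tauto.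
  - intros l [->|[a' [-> [H1 H2]]]]; simpl; auto.
Qed.

Lemma mutex_unit_r (P : task) (T : nat) rho t a b :
  1 <= t <= T -> mutex_at P t a b ->
  up_implied (graphplan_cnf P T) rho (Pos (a,t)) ->
  up_implied (graphplan_cnf P T) rho (Neg (b,t)).
Proof.
  intros Ht Hm HI.
  apply up_unit with (C := fun l => l = Neg (a, t) \/ l = Neg (b, t)).
  - right; right. exists t, a, b. split; [lia|]. split; [exact Hm|]. intro l; tauto.
  - right; reflexivity.
  - intros l' [->| ->] Hne; simpl; [exact HI|congruence].
Qed.

Lemma mutex_unit_l (P : task) (T : nat) rho t a b :
  1 <= t <= T -> mutex_at P t a b ->
  up_implied (graphplan_cnf P T) rho (Pos (b,t)) ->
  up_implied (graphplan_cnf P T) rho (Neg (a,t)).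
Proof.
  intros Ht Hm HI.
  apply up_unit with (C := fun l => l = Neg (a, t) \/ l = Neg (b, t)).
  - right; right. exists t, a, b. split; [lia|]. split; [exact Hm|]. intro l; tauto.
  - left; reflexivity.
  - intros l' [->| ->] Hne; simpl; [congruence|exact HI].
Qed.

Lemma goal_unit (P : task) (T : nat) rho g a0 :
  goal P g -> act_at P T a0 -> gadd P a0 g ->
  (forall a, act_at P T a -> gadd P a g -> a = a0 \/ up_implied (graphplan_cnf P T) rho (Neg (a,T))) ->
  up_implied (graphplan_cnf P T) rho (Pos (a0,T)).
Proof.
  intros Hg Ha0 Hga0 Hall.
  apply up_unit with (C := fun l => exists a, l = Pos (a, T) /\ act_at P T a /\ gadd P a g).
  - left. exists g. split; [exact Hg|]. intro l; tauto.
  - exists a0. auto.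
  - intros l' [a [-> [H1 H2]]] Hne; simpl.
    destruct (Hall a H1 H2) as [->|H]; [congruence|exact H].
Qed.

Lemma nomutex_self (P : task) t p : ~ snd (fact_layer P t) p p.
Proof. destruct t; simpl; [tauto| intros [H _]; apply H; reflexivity]. Qed.

Notation Lay n t := (fact_layer (MAP_task n) t).
Notation mv n x y := (@Real (MAP_task n) (x, y)).
Notation nop n p := (@Noop (MAP_task n) p).

Lemma act_in_move n t x y : map_edge n x y -> fst (Lay n t) (At x) ->
  act_in (MAP_task n) (Lay n t) (mv n x y).
Proof.
  intros He Hx. split; [exact He|]. split.
  - intros p Hp. simpl in Hp. subst. exact Hx.
  - intros p q Hp Hq. simpl in Hp, Hq; subst. apply nomutex_self.
Qed.

Lemma act_in_noop n t p : fst (Lay n t) p -> act_in (MAP_task n) (Lay n t) (nop n p).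
Proof.
  intros Hp. split; [exact I|]. split.
  - intros q Hq. simpl in Hq. subst. exact Hp.
  - intros q r Hq Hr. simpl in Hq, Hr; subst. apply nomutex_self.
Qed.

Lemma mono1 n t p : fst (Lay n t) p -> fst (Lay n (S t)) p.
Proof. intros H. simpl. exists (nop n p). split; [apply act_in_noop; exact H|reflexivity]. Qed.

Lemma mono n t t' p : t <= t' -> fst (Lay n t) p -> fst (Lay n t') p.
Proof. induction 1; auto using mono1. Qed.

Definition P (j : nat) : node := match j with 0 => L0 | S _ => L1 j end.
Definition d (x : node) : nat := match x with L0 => 0 | L1 k => k | Lb _ => 1 end.

Lemma d_P j : d (P j) = j.
Proof. destruct j; reflexivity. Qed.

Lemma P_S j : P (S j) = L1 (S j).
Proof. reflexivity. Qed.

Lemma edge_d n u v : map_edge n u v -> d v <= d u + 1.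
Proof.
  intros [[-> ->]|[[-> ->]|[[k [Hk [[-> ->]|[-> ->]]]]|[i [Hi [[-> ->]|[-> ->]]]]]]]; simpl; lia.
Qed.

Lemma edge_P n j : j + 1 <= 2*n-3 -> map_edge n (P j) (P (S j)).
Proof.
  intros Hj. destruct j as [|j].
  - left. split; reflexivity.
  - right; right; left. exists (S j). split; [lia|]. left. split; [reflexivity|].
    simpl. f_equal. lia.
Qed.

Lemma edge_into_P n u j : 1 <= j -> map_edge n u (P j) -> u = P (j-1) \/ u = L1 (S j).
Proof.
  intros Hj. destruct j as [|j]; [lia|]. simpl P.
  intros [[-> Hv]|[[-> Hv]|[[k [Hk [[-> Hv]|[-> Hv]]]]|[i [Hi [[-> Hv]|[-> Hv]]]]]]];
    try discriminate.
  - injection Hv as Hv. left. assert (j = 0) by lia. subst. reflexivity.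
  - injection Hv as Hv. left. destruct j; [lia|]. simpl. f_equal. lia.
  - injection Hv as Hv. right. f_equal. lia.
Qed.

Lemma edge_into_Lb2 n u : map_edge n u (Lb 2) -> u = L0.
Proof.
  intros [[-> Hv]|[[-> Hv]|[[k [Hk [[-> Hv]|[-> Hv]]]]|[i [Hi [[-> Hv]|[-> Hv]]]]]]];
    try discriminate; reflexivity.
Qed.

Lemma edge_from_Lb n i v : map_edge n (Lb i) v -> v = L0.
Proof.
  intros [[Hu ->]|[[Hu ->]|[[k [Hk [[Hu ->]|[Hu ->]]]]|[j [Hj [[Hu ->]|[Hu ->]]]]]]];
    try discriminate; reflexivity.
Qed.

Lemma edge_L0_Lb n i : 2 <= i <= n -> map_edge n L0 (Lb i).
Proof. intros Hi. right; right; right. exists i. split; [exact Hi|]. left; split; reflexivity. Qed.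

Lemma present_P n j : j <= 2*n-3 ->
  fst (Lay n j) (At (P j)) /\ (1 <= j -> fst (Lay n j) (Visited (P j))).
Proof.
  induction j as [|j IH]; intros Hj.
  - split; [reflexivity|lia].
  - destruct (IH ltac:(lia)) as [H1 _].
    assert (Ha := act_in_move n j (P j) (P (S j)) (edge_P n j ltac:(lia)) H1).
    split; intros; simpl; exists (mv n (P j) (P (S j))); split; auto; simpl; auto.
Qed.

Lemma present_At_P n j t : j <= t -> j <= 2*n-3 -> fst (Lay n t) (At (P j)).
Proof. intros H1 H2. apply mono with j; [exact H1|apply present_P; exact H2]. Qed.

Lemma present_V_P n j t : 1 <= j -> j <= t -> j <= 2*n-3 -> fst (Lay n t) (Visited (P j)).
Proof. intros H0 H1 H2. apply mono with j; [exact H1|apply present_P; auto]. Qed.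

Lemma present_L0 n t : fst (Lay n t) (At L0).
Proof. apply (present_At_P n 0 t); lia. Qed.

Lemma present_Lb n i t : 2 <= i <= n -> 1 <= t ->
  fst (Lay n t) (At (Lb i)) /\ fst (Lay n t) (Visited (Lb i)).
Proof.
  intros Hi Ht.
  assert (Ha := act_in_move n 0 L0 (Lb i) (edge_L0_Lb n i Hi) (present_L0 n 0)).
  split; apply mono with 1; auto; simpl; exists (mv n L0 (Lb i)); split; auto; simpl; auto.
Qed.

Definition good (t : nat) (p : map_fact) : Prop :=
  match p with At x => d x <= t | Visited x => d x <= t end.

Lemma upper n t p : fst (Lay n t) p -> good t p.
Proof.
  revert p. induction t as [|t IH]; intros p Hp.
  - simpl in Hp. subst. simpl. lia.
  - simpl in Hp. destruct Hp as [a [Ha Hg]].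
    destruct a as [[u v]|q].
    + destruct Ha as [He [Hpre _]].
      assert (Hu := IH _ (Hpre (At u) eq_refl)). simpl in Hu.
      simpl in He. assert (Hd := edge_d n u v He).
      simpl in Hg. destruct Hg as [->| ->]; simpl; lia.
    + destruct Ha as [_ [Hpre _]]. simpl in Hg. subst q.
      assert (Hq := IH _ (Hpre p eq_refl)). destruct p; simpl in *; lia.
Qed.

Lemma node_eq_dec (x y : node) : {x = y} + {x <> y}.
Proof. decide equality; apply Nat.eq_dec. Defined.

Definition AtAtProp n (FL : flayer (MAP_task n)) : Prop :=
  forall x y, x <> y -> fst FL (At x) -> fst FL (At y) -> snd FL (At x) (At y).

Definition moveish n (a : gact (MAP_task n)) : Prop :=
  (exists u v, a = mv n u v) \/ (exists z, a = nop n (At z)).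

Lemma mv_mutex n FL a b : AtAtProp n FL ->
  act_in (MAP_task n) FL a -> act_in (MAP_task n) FL b -> a <> b ->
  moveish n a -> moveish n b -> act_mutex (MAP_task n) FL a b.
Proof.
  intros H Ha Hb Hne Ma Mb.
  split; [exact Ha|]. split; [exact Hb|]. split; [exact Hne|].
  destruct Ha as [_ [Hpa _]]. destruct Hb as [_ [Hpb _]].
  destruct Ma as [[u1 [v1 ->]]|[z1 ->]]; destruct Mb as [[u2 [v2 ->]]|[z2 ->]].
  - destruct (node_eq_dec u1 u2) as [<-|Hu].
    + left. left. exists (At u1). simpl. auto.
    + right. exists (At u1), (At u2). simpl. split; [auto|]. split; [auto|].
      apply H; [exact Hu|apply (Hpa (At u1)); reflexivity|apply (Hpb (At u2)); reflexivity].
  - destruct (node_eq_dec u1 z2) as [<-|Hu].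
    + left. left. exists (At u1). simpl. auto.
    + right. exists (At u1), (At z2). simpl. split; [auto|]. split; [auto|].
      apply H; [exact Hu|apply (Hpa (At u1)); reflexivity|apply (Hpb (At z2)); reflexivity].
  - destruct (node_eq_dec z1 u2) as [<-|Hu].
    + left. right. exists (At z1). simpl. auto.
    + right. exists (At z1), (At u2). simpl. split; [auto|]. split; [auto|].
      apply H; [exact Hu|apply (Hpa (At z1)); reflexivity|apply (Hpb (At u2)); reflexivity].
  - assert (Hz : z1 <> z2) by (intro; subst; apply Hne; reflexivity).
    right. exists (At z1), (At z2). simpl. split; [auto|]. split; [auto|].
    apply H; [exact Hz|apply (Hpa (At z1)); reflexivity|apply (Hpb (At z2)); reflexivity].
Qed.

Lemma gadd_At n a x : gadd (MAP_task n) a (At x) ->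
  (exists u, a = mv n u x) \/ a = nop n (At x).
Proof.
  destruct a as [[u v]|q]; simpl; intros H.
  - left. exists u. destruct H as [H|H]; [injection H as ->; reflexivity|discriminate].
  - right. subst. reflexivity.
Qed.

Lemma gadd_V n a x : gadd (MAP_task n) a (Visited x) ->
  (exists u, a = mv n u x) \/ a = nop n (Visited x).
Proof.
  destruct a as [[u v]|q]; simpl; intros H.
  - left. exists u. destruct H as [H|H]; [discriminate|injection H as ->; reflexivity].
  - right. subst. reflexivity.
Qed.

Lemma AtAt n t : AtAtProp n (Lay n t).
Proof.
  induction t as [|t IH]; intros x y Hne Hx Hy.
  - simpl in Hx, Hy. injection Hx as ->. injection Hy as ->. congruence.
  - split; [congruence|]. split; [exact Hx|]. split; [exact Hy|].
    intros a b Ha Hb Hga Hgb.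
    apply mv_mutex; auto.
    + apply gadd_At in Hga. apply gadd_At in Hgb.
      destruct Hga as [[u ->]| ->]; destruct Hgb as [[u' ->]| ->]; try discriminate;
      intro Heq; injection Heq; intros; subst; congruence.
    + apply gadd_At in Hga. destruct Hga as [[u ->]| ->]; [left; eauto|right; eauto].
    + apply gadd_At in Hgb. destruct Hgb as [[u ->]| ->]; [left; eauto|right; eauto].
Qed.

Lemma VisLb2 n t : forall x, x <> Lb 2 -> t < d x + 2 ->
  fst (Lay n t) (Visited (Lb 2)) -> fst (Lay n t) (At x) ->
  snd (Lay n t) (Visited (Lb 2)) (At x).
Proof.
  induction t as [|t IH]; intros x Hx Hd HV HA.
  - simpl in HV. discriminate.
  - split; [discriminate|]. split; [exact HV|]. split; [exact HA|].
    intros a b Ha Hb Hga Hgb.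
    apply gadd_V in Hga. apply gadd_At in Hgb.
    destruct Hga as [[u ->]| ->].
    + assert (u = L0) as ->.
      { destruct Ha as [He _]. simpl in He. eapply edge_into_Lb2; exact He. }
      apply mv_mutex; auto using AtAt.
      * destruct Hgb as [[u' ->]| ->]; try discriminate; intro Heq; injection Heq; intros; subst; congruence.
      * left; eauto.
      * destruct Hgb as [[u' ->]| ->]; [left; eauto|right; eauto].
    + split; [exact Ha|]. split; [exact Hb|].
      destruct Hgb as [[u' ->]| ->]; (split; [discriminate|]); right.
      * destruct Hb as [He [Hpb _]]. simpl in He.
        destruct Ha as [_ [Hpa _]].
        assert (HVt := Hpa (Visited (Lb 2)) eq_refl).
        assert (HAt := Hpb (At u') eq_refl).
        exists (Visited (Lb 2)), (At u'). simpl. split; [reflexivity|]. split; [reflexivity|].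
        destruct (node_eq_dec u' (Lb 2)) as [->|Hu'].
        { apply edge_from_Lb in He. subst x. simpl in Hd.
          assert (t = 0) by lia. subst. simpl in HVt. discriminate. }
        apply IH; auto. assert (Hdd := edge_d n u' x He). lia.
      * destruct Ha as [_ [Hpa _]]. destruct Hb as [_ [Hpb _]].
        exists (Visited (Lb 2)), (At x). simpl. split; [reflexivity|]. split; [reflexivity|].
        apply IH; auto; [lia|apply (Hpa _ eq_refl)|apply (Hpb _ eq_refl)].
Qed.

Notation mvF n := (mv n (P (2*n-4)) (L1 (2*n-3))).
Notation Fn n := (MAP_cnf n).

Lemma edge_src_far n : 2 <= n -> map_edge n (P (2*n-4)) (L1 (2*n-3)).
Proof.
  intros Hn. assert (E : S (2*n-4) = 2*n-3) by lia. rewrite <- E.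
  apply (edge_P n (2*n-4)). lia.
Qed.

Lemma edge_into_far n u : 2 <= n -> map_edge n u (L1 (2*n-3)) -> u = P (2*n-4).
Proof.
  intros Hn.
  intros [[-> Hv]|[[-> Hv]|[[k [Hk [[-> Hv]|[-> Hv]]]]|[i [Hi [[-> Hv]|[-> Hv]]]]]]];
    try discriminate.
  - injection Hv as Hv. assert (2*n-4 = 0) as -> by lia. reflexivity.
  - injection Hv as Hv. assert (2*n-4 = S (k - 1)) as -> by lia. simpl. f_equal. lia.
  - injection Hv as Hv. lia.
Qed.

Lemma act_at_mvF n t : 2 <= n -> 2*n-4 <= t - 1 -> act_at (MAP_task n) t (mvF n).
Proof.
  intros Hn Ht. unfold act_at. apply act_in_move; [apply edge_src_far; exact Hn|].
  apply present_At_P; lia.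
Qed.

Lemma act_at_L0Lb n t i : 2 <= i <= n -> act_at (MAP_task n) t (mv n L0 (Lb i)).
Proof.
  intros Hi. unfold act_at. apply act_in_move; [apply edge_L0_Lb; exact Hi|apply present_L0].
Qed.

Lemma far_step n rho : 2 <= n ->
  up_implied (Fn n) rho (Neg (mvF n, 2*n-2)) ->
  up_implied (Fn n) rho (Pos (mvF n, 2*n-3)).
Proof.
  intros Hn HN. unfold MAP_cnf, MAP_horizon in *.
  assert (HVf : act_at (MAP_task n) (2*n-2) (nop n (Visited (L1 (2*n-3))))).
  { unfold act_at. apply act_in_noop.
    assert (E : L1 (2*n-3) = P (2*n-3)) by (destruct (2*n-3) eqn:E; [lia|reflexivity]).
    rewrite E. apply present_V_P; lia. }
  assert (H1 : up_implied (graphplan_cnf (MAP_task n) (2*n-2)) rho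
                 (Pos (nop n (Visited (L1 (2*n-3))), 2*n-2))).
  { apply goal_unit with (g := Visited (L1 (2*n-3))).
    - left. reflexivity.
    - exact HVf.
    - reflexivity.
    - intros a Ha Hg. apply gadd_V in Hg. destruct Hg as [[u ->]| ->]; [|left; reflexivity].
      right. destruct Ha as [He _]. simpl in He. apply edge_into_far in He; [|exact Hn].
      subst u. exact HN. }
  assert (E : 2*n-2-1 = 2*n-3) by lia.
  enough (H : up_implied (graphplan_cnf (MAP_task n) (2*n-2)) rho (Pos (mvF n, 2*n-2-1)))
    by (rewrite E in H; exact H).
  apply pre_clause_unit with (a := nop n (Visited (L1 (2*n-3)))) (p := Visited (L1 (2*n-3))).
  - lia.
  - exact HVf.
  - reflexivity.
  - apply act_at_mvF; lia.
  - simpl. right. reflexivity.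
  - exact H1.
  - intros a' Ha' Hg. apply gadd_V in Hg. destruct Hg as [[u ->]| ->].
    + left. destruct Ha' as [He _]. simpl in He. apply edge_into_far in He; [|exact Hn].
      subst u. reflexivity.
    + exfalso. destruct Ha' as [_ [Hp _]]. assert (Hu := upper _ _ _ (Hp _ eq_refl)).
      simpl in Hu. lia.
Qed.

Lemma leaf_posT n rho i : 2 <= n -> 2 <= i <= n ->
  up_implied (Fn n) rho (Pos (mv n L0 (Lb i), 2*n-2)) -> up_conflict (Fn n) rho.
Proof.
  intros Hn Hi HP.
  assert (HN : up_implied (Fn n) rho (Neg (mvF n, 2*n-2))).
  { unfold MAP_cnf, MAP_horizon in *. apply mutex_unit_r with (a := mv n L0 (Lb i)); [lia| |exact HP].
    unfold mutex_at. apply mv_mutex.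
    - apply AtAt.
    - apply act_at_L0Lb; exact Hi.
    - apply act_at_mvF; lia.
    - discriminate.
    - left; eauto.
    - left; eauto. }
  assert (HF := far_step n rho Hn HN).
  unfold MAP_cnf, MAP_horizon in *.
  apply pre_clause_conflict with (t := 2*n-2) (a := mv n L0 (Lb i)) (p := At L0).
  - lia.
  - apply act_at_L0Lb; exact Hi.
  - reflexivity.
  - exact HP.
  - intros a' Ha' Hg. assert (E : 2*n-2-1 = 2*n-3) by lia. rewrite E in *.
    apply mutex_unit_l with (b := mvF n); [lia| |exact HF].
    unfold mutex_at. apply mv_mutex.
    + apply AtAt.
    + exact Ha'.
    + apply act_at_mvF; lia.
    + apply gadd_At in Hg. destruct Hg as [[u ->]| ->]; discriminate.
    + apply gadd_At in Hg. destruct Hg as [[u ->]| ->]; [left; eauto|right; eauto].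
    + left; eauto.
Qed.

Notation FR n k := (Pos (mv n (P k) (P (S k)), S k)).

Lemma P_not_Lb j i : P j <> Lb i.
Proof. destruct j; discriminate. Qed.

Lemma front_step n rho k : 2 <= n -> k + 2 <= 2*n-3 ->
  up_implied (Fn n) rho (FR n (S k)) -> up_implied (Fn n) rho (FR n k).
Proof.
  intros Hn Hk H. unfold MAP_cnf, MAP_horizon in *.
  enough (H' : up_implied (graphplan_cnf (MAP_task n) (2*n-2)) rho
     (Pos (mv n (P k) (P (S k)), S (S k) - 1))) by exact H'.
  apply pre_clause_unit with (a := mv n (P (S k)) (P (S (S k)))) (p := At (P (S k))).
  - lia.
  - unfold act_at. apply act_in_move; [apply edge_P; lia|]. apply present_At_P; simpl; lia.
  - reflexivity.
  - unfold act_at. apply act_in_move; [apply edge_P; lia|]. apply present_At_P; simpl; lia.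
  - left. reflexivity.
  - exact H.
  - intros a' Ha' Hg. apply gadd_At in Hg. destruct Hg as [[u ->]| ->].
    + destruct Ha' as [He [Hp _]]. apply (edge_into_P n u (S k)) in He; [|lia].
      destruct He as [->| ->]; [left; replace (S k - 1) with k by lia; reflexivity|].
      exfalso. assert (Hu := upper _ _ _ (Hp _ eq_refl)). simpl in Hu. lia.
    + exfalso. destruct Ha' as [_ [Hp _]]. assert (Hu := upper _ _ _ (Hp _ eq_refl)).
      simpl in Hu. lia.
Qed.

Lemma frontier n rho : 2 <= n -> up_implied (Fn n) rho (Pos (mvF n, 2*n-3)) ->
  forall k, k <= 2*n-4 -> up_implied (Fn n) rho (FR n k).
Proof.
  intros Hn H0.
  assert (Hm : forall m, m <= 2*n-4 -> up_implied (Fn n) rho (FR n (2*n-4-m))).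
  { induction m as [|m IH]; intros Hm.
    - replace (2*n-4-0) with (2*n-4) by lia.
      replace (P (S (2*n-4))) with (L1 (2*n-3)) by (simpl; f_equal; lia).
      replace (S (2*n-4)) with (2*n-3) by lia. exact H0.
    - assert (E : 2*n-4-m = S (2*n-4-S m)) by lia.
      apply front_step; [exact Hn|lia|]. rewrite <- E. apply IH. lia. }
  intros k Hk. replace k with (2*n-4-(2*n-4-k)) by lia. apply Hm. lia.
Qed.

Lemma neg_L0Lb2 n rho k : 2 <= n -> k <= 2*n-4 -> up_implied (Fn n) rho (FR n k) ->
  up_implied (Fn n) rho (Neg (mv n L0 (Lb 2), S k)).
Proof.
  intros Hn Hk H. unfold MAP_cnf, MAP_horizon in *.
  apply mutex_unit_l with (b := mv n (P k) (P (S k))); [lia| |exact H].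
  unfold mutex_at. apply mv_mutex.
  - apply AtAt.
  - apply act_at_L0Lb; lia.
  - unfold act_at. apply act_in_move; [apply edge_P; lia|]. apply present_At_P; simpl; lia.
  - intro Heq. injection Heq. intros E _. discriminate E.
  - left; eauto.
  - left; eauto.
Qed.

Lemma vchain n rho : 2 <= n -> (forall k, k <= 2*n-4 -> up_implied (Fn n) rho (FR n k)) ->
  forall m, S (S m) <= 2*n-2 ->
  up_implied (Fn n) rho (Pos (nop n (Visited (Lb 2)), S (S m))) -> up_conflict (Fn n) rho.
Proof.
  intros Hn HFR. induction m as [|m IH]; intros Hm H.
  - unfold MAP_cnf, MAP_horizon in *.
    apply pre_clause_conflict with (t := 2) (a := nop n (Visited (Lb 2))) (p := Visited (Lb 2)).
    + lia.
    + unfold act_at. apply act_in_noop. apply present_Lb; lia.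
    + reflexivity.
    + exact H.
    + intros a' Ha' Hg. apply gadd_V in Hg. destruct Hg as [[u ->]| ->].
      * destruct Ha' as [He _]. simpl in He. apply edge_into_Lb2 in He. subst u.
        apply (neg_L0Lb2 n rho 0); [exact Hn|lia|apply HFR; lia].
      * exfalso. destruct Ha' as [_ [Hp _]]. specialize (Hp _ eq_refl). simpl in Hp. discriminate.
  - apply IH; [lia|].
    unfold MAP_cnf, MAP_horizon in *.
    change (S (S m)) with (S (S (S m)) - 1).
    apply pre_clause_unit with (a := nop n (Visited (Lb 2))) (p := Visited (Lb 2)).
    + lia.
    + unfold act_at. apply act_in_noop. apply present_Lb; lia.
    + reflexivity.
    + unfold act_at. apply act_in_noop. apply present_Lb; simpl; lia.
    + reflexivity.
    + exact H.
    + intros a' Ha' Hg. apply gadd_V in Hg. destruct Hg as [[u ->]| ->]; [|left; reflexivity].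
      right. destruct Ha' as [He _]. simpl in He. apply edge_into_Lb2 in He. subst u.
      apply (neg_L0Lb2 n rho (S m)); [exact Hn|lia|apply HFR; lia].
Qed.

Lemma leaf_negT n rho : 2 <= n ->
  up_implied (Fn n) rho (Neg (mv n L0 (Lb 2), 2*n-2)) -> up_conflict (Fn n) rho.
Proof.
  intros Hn HN0.
  assert (HV2 : act_at (MAP_task n) (2*n-2) (nop n (Visited (Lb 2)))).
  { unfold act_at. apply act_in_noop. apply present_Lb; lia. }
  assert (H1 : up_implied (Fn n) rho (Pos (nop n (Visited (Lb 2)), 2*n-2))).
  { unfold MAP_cnf, MAP_horizon in *.
    apply goal_unit with (g := Visited (Lb 2)).
    - right. reflexivity.
    - exact HV2.
    - reflexivity.
    - intros a Ha Hg. apply gadd_V in Hg. destruct Hg as [[u ->]| ->]; [|left; reflexivity].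
      right. destruct Ha as [He _]. simpl in He. apply edge_into_Lb2 in He. subst u. exact HN0. }
  assert (HN : up_implied (Fn n) rho (Neg (mvF n, 2*n-2))).
  { unfold MAP_cnf, MAP_horizon in *.
    apply mutex_unit_r with (a := nop n (Visited (Lb 2))); [lia| |exact H1].
    unfold mutex_at. split; [exact HV2|]. split; [apply act_at_mvF; lia|].
    split; [discriminate|]. right.
    exists (Visited (Lb 2)), (At (P (2*n-4))). split; [reflexivity|]. split; [reflexivity|].
    apply VisLb2.
    - apply P_not_Lb.
    - rewrite d_P. lia.
    - apply present_Lb; lia.
    - apply present_At_P; lia. }
  assert (HF := far_step n rho Hn HN).
  assert (HFR := frontier n rho Hn HF).
  apply (vchain n rho Hn HFR (2*n-4)); [lia|].
  replace (S (S (2*n-4))) with (2*n-2) by lia. exact H1.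
Qed.

Definition okrho n m (rho : list (lit (gvar (MAP_task n)))) :=
  forall l, In l rho -> exists i, m < i /\ l = Neg (mv n L0 (Lb i), 2*n-2).

Lemma goal_achievers n g : 2 <= n -> goal (MAP_task n) g ->
  act_at (MAP_task n) (2*n-2) (nop n g) /\
  exists u v, act_at (MAP_task n) (2*n-2) (mv n u v) /\ gadd (MAP_task n) (mv n u v) g.
Proof.
  intros Hn [-> | ->]; split.
  - unfold act_at. apply act_in_noop.
    assert (E : L1 (2*n-3) = P (2*n-3)) by (destruct (2*n-3) eqn:E; [lia|reflexivity]).
    rewrite E. apply present_V_P; lia.
  - exists (P (2*n-4)), (L1 (2*n-3)). split; [apply act_at_mvF; lia| right; reflexivity].
  - unfold act_at. apply act_in_noop. apply present_Lb; lia.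
  - exists L0, (Lb 2). split; [apply act_at_L0Lb; lia|right; reflexivity].
Qed.

Lemma goal_notbad n g i : goal (MAP_task n) g -> gadd (MAP_task n) (mv n L0 (Lb i)) g -> i = 2.
Proof. intros [-> | ->] [H|H]; simpl in H; congruence. Qed.

Lemma closure n m rho : 2 <= n -> 2 <= m -> okrho n m rho ->
  forall l, up_implied (Fn n) rho l -> In l rho.
Proof.
  intros Hn Hm Hok l H. induction H as [l Hin|C l HF HC Hoth IH]; [exact Hin|].
  exfalso.
  unfold MAP_cnf, MAP_horizon, graphplan_cnf in HF.
  destruct HF as [[g [Hg Hs]]|[[t [a [p [Ht [Ha [Hp Hs]]]]]]|[t [a [b [Ht [Hm' Hs]]]]]]].
  - apply Hs in HC. destruct HC as [a [-> [Ha Hga]]].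
    destruct (goal_achievers n g Hn Hg) as [Hn1 [u [v [Hm1 Hg1]]]].
    assert (Hbad : forall a', gadd (MAP_task n) a' g -> In (Neg (a', 2*n-2)) rho -> False).
    { intros a' Hg' Hin. destruct (Hok _ Hin) as [i [Hi E]]. injection E; intros; subst.
      apply goal_notbad in Hg'; [lia|exact Hg]. }
    destruct a as [r|q].
    + apply (Hbad (nop n g)); [reflexivity|].
      apply (IH (Pos (nop n g, 2*n-2))); [|discriminate].
      apply (proj2 (Hs _)). exists (nop n g). split; [reflexivity|]. split; [exact Hn1|reflexivity].
    + apply (Hbad (mv n u v)); [exact Hg1|].
      apply (IH (Pos (mv n u v, 2*n-2))); [|discriminate].
      apply (proj2 (Hs _)). exists (mv n u v). split; [reflexivity|]. split; [exact Hm1|exact Hg1].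
  - apply Hs in HC. destruct HC as [->|[a' [-> [Ha' Hg']]]].
    + destruct Ha as [_ [Hpre _]]. assert (Hq := Hpre p Hp).
      replace (t-1) with (S (t-2)) in Hq by lia. simpl in Hq.
      destruct Hq as [a'' [Ha'' Hg'']].
      assert (Hin : In (lneg (Pos (a'', t-1))) rho).
      { apply IH; [|discriminate]. apply Hs. right. exists a''. split; [reflexivity|].
        split; [|exact Hg'']. unfold act_at. replace (t-1-1) with (t-2) by lia. exact Ha''. }
      destruct (Hok _ Hin) as [i [Hi E]]. injection E; intros. lia.
    + assert (Hin : In (lneg (Neg (a, t))) rho).
      { apply IH; [|discriminate]. apply Hs. left. reflexivity. }
      destruct (Hok _ Hin) as [i [Hi E]]. discriminate.
  - destruct Hm' as [_ [_ [Hab _]]].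
    apply Hs in HC. destruct HC as [-> | ->].
    + assert (Hin : In (lneg (Neg (b, t))) rho).
      { apply IH; [apply Hs; right; reflexivity|]. intro E; injection E; intros; subst; auto. }
      destruct (Hok _ Hin) as [i [Hi E]]. discriminate.
    + assert (Hin : In (lneg (Neg (a, t))) rho).
      { apply IH; [apply Hs; left; reflexivity|]. intro E; injection E; intros; subst; auto. }
      destruct (Hok _ Hin) as [i [Hi E]]. discriminate.
Qed.

Lemma noconf n m rho : 2 <= n -> 2 <= m -> okrho n m rho -> ~ up_conflict (Fn n) rho.
Proof.
  intros Hn Hm Hok [[C [HF Hall]]|[l [H1 H2]]].
  - assert (HF' := HF). unfold MAP_cnf, MAP_horizon, graphplan_cnf in HF'.
    destruct HF' as [[g [Hg Hs]]|[[t [a [p [Ht [Ha [Hp Hs]]]]]]|[t [a [b [Ht [Hm' Hs]]]]]]].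
    + destruct (goal_achievers n g Hn Hg) as [Hn1 _].
      assert (H := Hall (Pos (nop n g, 2*n-2))).
      assert (Hin : In (lneg (Pos (nop n g, 2*n-2))) rho).
      { apply (closure n m rho); auto. apply H. apply (proj2 (Hs _)). exists (nop n g). split; [reflexivity|]. split; [exact Hn1|reflexivity]. }
      destruct (Hok _ Hin) as [i [Hi E]]. discriminate.
    + assert (Hin : In (lneg (Neg (a, t))) rho).
      { apply (closure n m rho); auto. apply Hall. apply (proj2 (Hs _)). left. reflexivity. }
      destruct (Hok _ Hin) as [i [Hi E]]. discriminate.
    + assert (Hin : In (lneg (Neg (a, t))) rho).
      { apply (closure n m rho); auto. apply Hall. apply (proj2 (Hs _)). left. reflexivity. }
      destruct (Hok _ Hin) as [i [Hi E]]. discriminate.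
  - apply (closure n m rho) in H1; auto. apply (closure n m rho) in H2; auto.
    destruct (Hok _ H1) as [i [_ ->]]. destruct (Hok _ H2) as [j [_ E]].
    simpl in E. discriminate.
Qed.

Fixpoint mk n m : dpll_tree (gvar (MAP_task n)) :=
  match m with
  | 0 => DBranch (mv n L0 (Lb 2), 2*n-2) DLeaf DLeaf
  | S m' => DBranch (mv n L0 (Lb (m'+3)), 2*n-2) DLeaf (mk n m')
  end.

Lemma mk_size n m : tree_size (mk n m) = 2*m+3.
Proof. induction m; simpl in *; lia. Qed.

Lemma isvar_w n i : 2 <= n -> 2 <= i <= n -> MAP_isvar n (mv n L0 (Lb i), 2*n-2).
Proof.
  intros Hn Hi. unfold MAP_isvar, is_gvar, MAP_horizon. simpl. split; [lia|].
  apply act_at_L0Lb; lia.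
Qed.

Lemma mk_ok n m : 2 <= n -> m + 2 <= n -> forall rho, okrho n (m+2) rho ->
  dpll_refutes (Fn n) (MAP_isvar n) rho (mk n m).
Proof.
  intros Hn. induction m as [|m IH]; intros Hmn rho Hok; simpl.
  - split; [apply (noconf n 2 rho); auto|]. split; [apply isvar_w; lia|].
    split; [intro H; apply (closure n 2 rho) in H; auto; destruct (Hok _ H) as [i [_ E]]; discriminate|].
    split; [intro H; apply (closure n 2 rho) in H; auto; destruct (Hok _ H) as [i [Hi E]]; injection E; intros; lia|].
    split; [apply (leaf_posT n _ 2); [exact Hn|lia|apply up_dec; left; reflexivity]|].
    apply (leaf_negT n); auto. apply up_dec; left; reflexivity.
  - split; [apply (noconf n (S m + 2) rho); auto; lia|]. split; [apply isvar_w; lia|].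
    split; [intro H; apply (closure n (S m + 2) rho) in H; auto; [destruct (Hok _ H) as [i [_ E]]; discriminate|lia]|].
    split; [intro H; apply (closure n (S m + 2) rho) in H; auto; [destruct (Hok _ H) as [i [Hi E]]; injection E; intros; lia|lia]|].
    split; [apply (leaf_posT n _ (m+3)); [exact Hn|lia|apply up_dec; left; reflexivity]|].
    apply IH; [lia|]. intros l [<-|Hin].
    + exists (m+3). split; [lia|reflexivity].
    + destruct (Hok l Hin) as [i [Hi E]]. exists i. split; [lia|exact E].
Qed.

Theorem corollary2 : forall n : nat, 2 <= n ->
  exists t : dpll_tree (gvar (MAP_task n)),
    dpll_refutation (MAP_cnf n) (MAP_isvar n) t /\
    tree_size t = 2 * Nat.log2_up n + 1.
Proof.
  intros n Hn.
  assert (Hk1 : 0 < Nat.log2_up n) by (apply Nat.log2_up_pos; lia).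
  assert (Hp : n - 1 < 2 ^ (n-1)) by (apply Nat.pow_gt_lin_r; lia).
  assert (Hk2 : Nat.log2_up n <= n - 1) by (apply Nat.log2_up_le_pow2; lia).
  exists (mk n (Nat.log2_up n - 1)). split.
  - apply mk_ok; [lia|lia|]. intros l [].
  - rewrite mk_size. lia.
Qed.
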